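(* Let $(s_k)_{k\ge0}$ and $(\sigma_k)_{k\ge0}$ be a binomial transform pair and let $m$, $n$, $r$ be non-negative integers. Then $$\sum_{k = 1}^n \sum_{j = 0}^{k - 1} \frac{(- 1)^j}{n - j + 1}\binom{n}{j}\sum_{p = 0}^r (- 1)^p \binom{r}{p} s_{k + p + m - j} = \frac{(- 1)^n}{n + 1} \sum_{p = 0}^m (- 1)^p \binom{m}{p} \left( \sigma_{n + p + r} - \sigma_{p + r} \right).$$ In particular, $$\sum_{k = 1}^n \sum_{j = 0}^{k - 1} \frac{( - 1)^j }{n - j + 1}\binom{n}{j}\sum_{p = 0}^r ( - 1)^p \binom{r}{p}s_{k + p - j} = \frac{( - 1)^n }{n + 1}\left( \sigma _{n + r} - \sigma _r \right),$$ $$\sum_{k = 1}^n \sum_{j = 0}^{k - 1} \frac{( - 1)^j }{n - j + 1}\binom{n}{j}s_{k + m - j} = \frac{( - 1)^n }{n + 1}\sum_{p = 0}^m ( - 1)^p \binom{m}{p}\left( \sigma _{n + p} - \sigma _p \right),$$ and $$\sum_{k = 1}^n \sum_{j = 0}^{k - 1} \frac{(- 1)^j}{n - j + 1}\binom{n}{j} s_{k - j} = \frac{(- 1)^n}{n + 1}(\sigma_n - \sigma_0).$$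
   Context: Two sequences of complex numbers $(s_n)_{n\ge0}$ and $(\sigma_n)_{n\ge0}$ form a binomial transform pair if $\sigma_n = \sum_{k = 0}^n \binom{n}{k} (-1)^k s_k$ for all $n\ge 0$ (equivalently $s_n = \sum_{k = 0}^n \binom{n}{k} (-1)^k \sigma_k$ for all $n\ge0$). Empty sums are zero. *)

(* Defs.v *)
From HB Require Import structures.
From mathcomp Require Import all_boot all_order all_algebra.
From mathcomp Require Import reals complex.
Set Implicit Arguments. Unset Strict Implicit. Unset Printing Implicit Defensive.
Import Order.TTheory GRing.Theory Num.Theory.
Local Open Scope ring_scope.

Definition binomial_transform_pair (R : realType) (s sigma : nat -> R[i]) : Prop :=
  forall n : nat,
    sigma n = \sum_(0 <= k < n.+1) ('C(n, k)%:R * (-1) ^+ k * s k).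

(* Main.v *)
Require Import Defs.
From HB Require Import structures.
From mathcomp Require Import all_boot all_order all_algebra.
From mathcomp Require Import reals complex ring zify.
Import Order.TTheory GRing.Theory Num.Theory.
Local Open Scope ring_scope.
Section S.
Variable R : realType.
Local Notation C := (R[i]).
Lemma PD (f : nat -> C) m :
  \sum_(0 <= p < m.+2) ((-1) ^+ p * 'C(m.+1, p)%:R * f p) =
  \sum_(0 <= p < m.+1) ((-1) ^+ p * 'C(m, p)%:R * (f p - f p.+1)).
Proof.
have E1: \sum_(0<=i<m.+1) (-1)^+i.+1 * 'C(m,i)%:R * f i.+1 = - \sum_(0<=i<m.+1) (-1)^+i * 'C(m,i)%:R * f i.+1.
  by rewrite -sumrN; apply eq_bigr => i _; rewrite exprS; ring.
rewrite big_nat_recl //= bin0 expr0 !mul1r.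
under eq_bigr do rewrite binS natrD mulrDr mulrDl.
rewrite big_split /= [X in _ + (X + _)]big_nat_recr //= bin_small // mulr0 mul0r addr0.
rewrite E1.
under [X in _ = X]eq_bigr do rewrite mulrBr.
rewrite sumrB [X in _ = X - _]big_nat_recl //= bin0 expr0 !mul1r.
ring.
Qed.
Definition T (s : nat -> C) N := \sum_(0 <= k < N.+1) ('C(N, k)%:R * (-1) ^+ k * s k).
Lemma T_ext s t N : (forall q, s q = t q) -> T s N = T t N.
Proof. by move=> h; rewrite /T; apply eq_bigr => i _; rewrite h. Qed.
Lemma T_sub s t N : T (fun q => s q - t q) N = T s N - T t N.
Proof. by rewrite /T -sumrB; apply eq_bigr => i _; rewrite mulrBr. Qed.
Lemma T_shift s N : T (fun q => s q.+1) N = T s N - T s N.+1.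
Proof.
have ->: T s N.+1 = \sum_(0 <= p < N.+2) ((-1) ^+ p * 'C(N.+1, p)%:R * s p).
  by apply eq_bigr => i _; ring.
rewrite PD -sumrB /T; apply eq_bigr => i _; ring.
Qed.
Lemma T_r s r N : T (fun q => \sum_(0 <= p < r.+1) ((-1) ^+ p * 'C(r, p)%:R * s (q + p)%N)) N
   = T s (N + r).
Proof.
elim: r N => [|r IH] N.
  by rewrite addn0; apply T_ext => q; rewrite big_nat1 expr0 bin0 !mul1r addn0.
rewrite (@T_ext _ (fun q => \sum_(0 <= p < r.+1) ((-1) ^+ p * 'C(r, p)%:R * s (q + p)%N)
   - \sum_(0 <= p < r.+1) ((-1) ^+ p * 'C(r, p)%:R * s (q.+1 + p)%N))); last first.
  move=> q; rewrite (PD (fun p => s (q + p)%N)) -sumrB; apply eq_bigr => i _.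
  by rewrite addnS addSn mulrBr.
rewrite T_sub (T_shift (fun q => \sum_(0 <= p < r.+1) ((-1) ^+ p * 'C(r, p)%:R * s (q + p)%N))).
by rewrite !IH opprB addrC addrNK addSn addnS.
Qed.
Lemma T_m w m N : T (fun q => w (q + m)%N) N =
  \sum_(0 <= p < m.+1) ((-1) ^+ p * 'C(m, p)%:R * T w (N + p)%N).
Proof.
elim: m w N => [|m IH] w N.
  by rewrite big_nat1 expr0 bin0 !mul1r addn0; apply T_ext => q; rewrite addn0.
rewrite (@T_ext _ (fun q => (fun q => w q.+1) (q + m)%N)); last by move=> q; rewrite addnS.
rewrite (IH (fun q => w q.+1)) (PD (fun p => T w (N + p)%N)); apply eq_bigr => i _.
by rewrite (T_shift w) addnS.
Qed.
Lemma A (c w : nat -> C) n :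
  \sum_(1 <= k < n.+1) \sum_(0 <= j < k) (c j * w (k - j)%N) =
  \sum_(1 <= i < n.+1) (w i * \sum_(0 <= j < (n - i).+1) c j).
Proof.
elim: n => [|n IH]; first by rewrite !big_geq.
rewrite big_nat_recr //= IH [RHS]big_nat_recr //= subnn big_nat1.
rewrite [in RHS](@eq_big_nat _ _ _ 1 n.+1 _ (fun i => w i * \sum_(0 <= j < (n - i).+1) c j + w i * c (n.+1 - i)%N)); last first.
  move=> i /andP [h1 h2]; have ->: (n.+1 - i = (n - i).+1)%N by lia.
  by rewrite [in LHS]big_nat_recr //= mulrDr.
rewrite big_split /= -!addrA; congr (_ + _).
rewrite [in LHS]big_nat_recl // subn0 addrC mulrC; congr (_ + _).
rewrite [in RHS]big_add1 /= [in RHS]big_nat_rev /=; apply eq_big_nat => i /andP [h1 h2].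
rewrite mulrC; congr (w _ * c _); lia.
Qed.
Lemma B N M : \sum_(0 <= j < M.+1) ((-1) ^+ j * 'C(N.+1, j)%:R) = (-1) ^+ M * 'C(N, M)%:R :> C.
Proof.
elim: M => [|M IH]; first by rewrite big_nat1 !bin0.
rewrite big_nat_recr //= IH binS natrD exprS; ring.
Qed.
Lemma coef n j : (j <= n)%N ->
  (-1) ^+ j / (n - j + 1)%N%:R * 'C(n, j)%:R =
  ((n + 1)%N%:R)^-1 * ((-1) ^+ j * 'C(n.+1, j)%:R) :> C.
Proof.
move=> hj.
have h : (n.+1 * 'C(n, j) = (n.+1 - j) * 'C(n.+1, j))%N := mul_bin_down n.+1 j.
have e : (n - j + 1 = n.+1 - j)%N by lia.
have nz1 : (n - j + 1)%N%:R != 0 :> C by rewrite pnatr_eq0 addn1.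
have nz2 : (n + 1)%N%:R != 0 :> C by rewrite pnatr_eq0 addn1.
have hC : ('C(n, j)%:R : C) = (n - j + 1)%N%:R * 'C(n.+1, j)%:R / (n + 1)%N%:R.
  rewrite -natrM e -h natrM -addn1. by rewrite mulrAC mulfV ?mul1r.
rewrite hC; field; by rewrite !natr1 !pnatr_eq0.
Qed.
Lemma core (g : nat -> nat -> C) (u : nat -> C) n :
  (forall k j, (j < k)%N -> g k j = u (k - j)%N) ->
  \sum_(1 <= k < n.+1) \sum_(0 <= j < k) ((-1) ^+ j / (n - j + 1)%N%:R * 'C(n, j)%:R * g k j)
  = (-1) ^+ n / (n + 1)%N%:R * (T u n - T u 0).
Proof.
move=> hg.
rewrite (@eq_big_nat _ _ _ 1 n.+1 _ (fun k => ((n + 1)%N%:R)^-1 *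
   \sum_(0 <= j < k) ((-1) ^+ j * 'C(n.+1, j)%:R * u (k - j)%N))); last first.
  move=> k /andP [h1 h2]; rewrite big_distrr; apply eq_big_nat => j /andP [_ hj].
  rewrite hg // coef; last by lia. by rewrite -[in LHS]mulrA.
rewrite -big_distrr A.
have T0 : T u 0 = u 0%N by rewrite /T big_nat1 bin0 expr0 !mul1r.
have Tn : T u n - T u 0 = \sum_(1 <= i < n.+1) ('C(n, i)%:R * (-1) ^+ i * u i).
  by rewrite T0 /T big_nat_recl // bin0 expr0 !mul1r big_add1 /= addrAC subrr add0r.
rewrite Tn !big_distrr; apply eq_big_nat => i /andP [h1 h2].
rewrite B bin_sub; last by lia.
have hs : (-1) ^+ n = (-1) ^+ (n - i) * (-1) ^+ i :> C by rewrite -exprD subnK //; lia.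
have sq : (-1) ^+ i * (-1) ^+ i = 1 :> C.
  by rewrite -expr2 sqrr_sign.
rewrite hs.
transitivity (((n + 1)%N%:R)^-1 * (u i * ((-1) ^+ (n - i) * 'C(n, i)%:R)) * ((-1) ^+ i * (-1) ^+ i)).
  by rewrite sq mulr1.
change ((n + 1)%N%:R^-1 * (u i * ((-1) ^+ (n - i) * 'C(n, i)%:R)) * ((-1) ^+ i * (-1) ^+ i) = (((-1) ^+ (n - i) * (-1) ^+ i / (n + 1)%N%:R) * ('C(n, i)%:R * (-1) ^+ i * u i))); ring.
Qed.
End S.

Theorem theorem10 (R : realType) (s sigma : nat -> R[i])
  (hpair : binomial_transform_pair s sigma) (m n r : nat) :
  (\sum_(1 <= k < n.+1) \sum_(0 <= j < k)
      ((-1) ^+ j / (n - j + 1)%N%:R * 'C(n, j)%:R *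
       \sum_(0 <= p < r.+1) ((-1) ^+ p * 'C(r, p)%:R * s (k + p + m - j)%N))
   = (-1) ^+ n / (n + 1)%N%:R *
     \sum_(0 <= p < m.+1) ((-1) ^+ p * 'C(m, p)%:R *
                           (sigma (n + p + r)%N - sigma (p + r)%N)))
  /\
  (\sum_(1 <= k < n.+1) \sum_(0 <= j < k)
      ((-1) ^+ j / (n - j + 1)%N%:R * 'C(n, j)%:R *
       \sum_(0 <= p < r.+1) ((-1) ^+ p * 'C(r, p)%:R * s (k + p - j)%N))
   = (-1) ^+ n / (n + 1)%N%:R * (sigma (n + r)%N - sigma r))
  /\
  (\sum_(1 <= k < n.+1) \sum_(0 <= j < k)
      ((-1) ^+ j / (n - j + 1)%N%:R * 'C(n, j)%:R * s (k + m - j)%N)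
   = (-1) ^+ n / (n + 1)%N%:R *
     \sum_(0 <= p < m.+1) ((-1) ^+ p * 'C(m, p)%:R *
                           (sigma (n + p)%N - sigma p)))
  /\
  (\sum_(1 <= k < n.+1) \sum_(0 <= j < k)
      ((-1) ^+ j / (n - j + 1)%N%:R * 'C(n, j)%:R * s (k - j)%N)
   = (-1) ^+ n / (n + 1)%N%:R * (sigma n - sigma 0%N)).
Proof.
have hT : forall N, T R s N = sigma N by move=> N; rewrite hpair.
split.
  pose v := fun q => \sum_(0 <= p < r.+1) ((-1) ^+ p * 'C(r, p)%:R * s (q + p)%N).
  pose u := fun q => v (q + m)%N.
  have hg : forall k j, (j < k)%N ->
     \sum_(0 <= p < r.+1) ((-1) ^+ p * 'C(r, p)%:R * s (k + p + m - j)%N) = u (k - j)%N.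
    move=> k j hjk; rewrite /u /v; apply eq_bigr => p _; congr (_ * s _); lia.
  apply: (etrans (@core R _ u n hg)); congr (_ * _).
  have TU : forall N, T R u N = \sum_(0 <= p < m.+1) ((-1) ^+ p * 'C(m, p)%:R * sigma (N + p + r)%N).
    move=> N; rewrite /u (@T_m R v m N); apply eq_bigr => p _.
    by rewrite /v T_r hT.
  rewrite !TU -sumrB; apply eq_bigr => p _; by rewrite mulrBr add0n.
split.
  pose v := fun q => \sum_(0 <= p < r.+1) ((-1) ^+ p * 'C(r, p)%:R * s (q + p)%N).
  have hg : forall k j, (j < k)%N ->
     \sum_(0 <= p < r.+1) ((-1) ^+ p * 'C(r, p)%:R * s (k + p - j)%N) = v (k - j)%N.
    move=> k j hjk; rewrite /v; apply eq_bigr => p _; congr (_ * s _); lia.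
  apply: (etrans (@core R _ v n hg)); congr (_ * _).
  by rewrite /v !T_r !hT add0n.
split.
  pose u := fun q => s (q + m)%N.
  have hg : forall k j, (j < k)%N -> s (k + m - j)%N = u (k - j)%N.
    move=> k j hjk; rewrite /u; congr (s _); lia.
  apply: (etrans (@core R _ u n hg)); congr (_ * _).
  rewrite /u !(@T_m R s m) -sumrB; apply eq_bigr => p _; by rewrite mulrBr !hT add0n.
have hg : forall k j, (j < k)%N -> s (k - j)%N = s (k - j)%N by [].
apply: (etrans (@core R _ s n hg)); congr (_ * _).
by rewrite !hT.
Qed.
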